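(* For every positive integer $t$, $md_t \leq \left\lceil \frac{t+1}{2} \right\rceil$.
   Context: Let $t$ be a positive integer (the number of topics). A voter matrix with $t$ topics is a matrix $V\in\{Y,N\}^{n\times t}$ for some positive integer $n$ (the number of voters; rows are voters), subject to the standing assumption that in every column the number of entries $Y$ is at least the number of entries $N$ (so $Y$ is the majority opinion on every topic). $\mathcal{V}_t$ denotes the set of all voter matrices with $t$ topics and any number of voters. A proposal is a vector $p\in\{Y,N\}^t$. A voter (row) $v$ supports $p$ if the Hamming distance between $v$ and $p$ is at most $t/2$. A proposal $p$ is supported by $V$ if at least $n/2$ of the rows of $V$ support $p$. The number of majority decisions of a proposal is its number of entries $Y$. For $V$, $md_V$ is the maximum number $m$ such that there exists a proposal supported by $V$ with $m$ majority decisions, and $md_t=\min_{V\in\mathcal{V}_t} md_V$. *)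

(* Defs.v *)
From mathcomp Require Import all_boot all_algebra.
Set Implicit Arguments. Unset Strict Implicit. Unset Printing Implicit Defensive.

(* Entries: true = Y, false = N. Rows are voters, columns topics. *)

Definition voter_matrix (n t : nat) (V : 'M[bool]_(n, t)) : bool :=
  (0 < n) && [forall j : 'I_t, #|[set i | ~~ V i j]| <= #|[set i | V i j]|].

Definition hdist n t (V : 'M[bool]_(n, t)) (i : 'I_n) (p : {ffun 'I_t -> bool}) : nat :=
  #|[set j | V i j != p j]|.

Definition supports n t (V : 'M[bool]_(n, t)) (i : 'I_n) (p : {ffun 'I_t -> bool}) : bool :=
  2 * hdist V i p <= t.

Definition supported n t (V : 'M[bool]_(n, t)) (p : {ffun 'I_t -> bool}) : bool :=
  n <= 2 * #|[set i | supports V i p]|.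

(* number of majority decisions = number of Y entries *)
Definition num_md t (p : {ffun 'I_t -> bool}) : nat := #|[set j | p j]|.

Definition md_V n t (V : 'M[bool]_(n, t)) : nat :=
  \max_(p : {ffun 'I_t -> bool} | supported V p) num_md p.

(* md_t <= m  iff  some voter matrix V with t topics has md_V <= m
   (the minimum over the nonempty set of values md_V is attained). *)
Definition md_t_le (t m : nat) : Prop :=
  exists (n : nat) (V : 'M[bool]_(n, t)), voter_matrix V /\ md_V V <= m.

(* Main.v *)
Require Import Defs.
From mathcomp Require Import all_boot all_algebra.
From mathcomp Require Import zify.

Lemma card_split t k (P : pred 'I_(t+k)) :
  #|[set i | P i]| = #|[set i | P (lshift k i)]| + #|[set i | P (rshift t i)]|.
Proof.
rewrite -!sum1_card big_split_ord /=.
by congr (_ + _); apply: eq_bigl => i; rewrite !inE.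
Qed.

Lemma card_ge t k : #|[set i : 'I_(t + k) | t <= i]| = k.
Proof.
rewrite card_split.
have -> : [set i : 'I_t | t <= lshift k i] = set0.
  by apply/setP => i; rewrite !inE /= leqNgt ltn_ord.
have -> : [set i : 'I_k | t <= rshift t i] = setT.
  by apply/setP => i; rewrite !inE /= leq_addr.
by rewrite cards0 cardsT card_ord.
Qed.

Definition Vt (t : nat) : 'M[bool]_(t + t.-1, t) :=
  \matrix_(i < t + t.-1, j < t) ((t <= i) || (i == j :> nat)).

Lemma Vt_lshift t (i j : 'I_t) : Vt t (lshift t.-1 i) j = (i == j).
Proof. by rewrite /Vt mxE /= leqNgt ltn_ord. Qed.

Lemma Vt_rshift t (i : 'I_t.-1) (j : 'I_t) : Vt t (rshift t i) j.
Proof. by rewrite /Vt mxE /= leq_addr. Qed.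

Theorem lemma4p2 (t : nat) : 0 < t -> md_t_le t (t.+2)./2.
Proof.
move=> t0; exists (t + t.-1), (Vt t); split.
  rewrite /voter_matrix addn_gt0 t0 /=; apply/forallP => j.
  have HY : #|[set i | Vt t i j]| = t.
    rewrite card_split.
    have -> : [set i | Vt t (lshift t.-1 i) j] = [set j].
      by apply/setP => i; rewrite !inE Vt_lshift.
    have -> : [set i | Vt t (rshift t i) j] = setT.
      by apply/setP => i; rewrite !inE Vt_rshift.
    by rewrite cards1 cardsT card_ord add1n prednK.
  have HN : [set i | ~~ Vt t i j] = ~: [set i | Vt t i j].
    by apply/setP => i; rewrite !inE.
  have := cardsC [set i | Vt t i j]; rewrite -HN card_ord HY; move: (#|_|) => a; rewrite -subn1; lia.
apply/bigmax_leqP => p; rewrite /supported => Hs.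
rewrite leqNgt; apply/negP => Hm.
have Hsub : [set i | supports (Vt t) i p] \subset [set i : 'I_(t + t.-1) | t <= i].
  apply/subsetP => i; rewrite !inE; apply: contraLR; rewrite -ltnNge => it.
  have -> : i = lshift t.-1 (Ordinal it) by apply: val_inj.
  rewrite /supports /hdist -ltnNge.
  have H1 : [set j | p j] \subset (Ordinal it) |: [set j | Vt t (lshift t.-1 (Ordinal it)) j != p j].
    apply/subsetP => j; rewrite !inE Vt_lshift => pj.
    case: eqP => [-> //|/eqP ne]. by move: ne; rewrite eq_sym => /negbTE ->; rewrite pj.
  have := subset_leq_card H1; rewrite cardsU1 /num_md.
  move: Hm; rewrite /num_md; set a := #|[set j | p j]|;
    set b := #|[set j | _ != _]|; set c := (_ \notin _).
  case: (c) => /=; case: (odd t) (odd_double_half t) => /=; lia.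
have := subset_leq_card Hsub.
rewrite card_ge; move: Hs; move: (#|_|) => a; rewrite -!subn1; lia.
Qed.
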